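(* Fix $b,c,d\in\mathbb C$ with $|c|<1$ and $|d|<1$. Define $f\colon\mathbb R^2\to\mathbb R$ by \[ f(x,y)=\Re\left[\frac{2(x+iy)\overline b+(x+iy)^2\overline d+\overline{b^2}c}{1-c\overline d}-\frac{|x+iy|^2+(x+iy)^2\overline c}{1-|c|^2}-\frac{|b|^2+\overline{b^2}d}{1-|d|^2}\right]. \] Then $f$ has a unique critical point $(x_0,y_0)$, which satisfies \[ x_0+iy_0=\frac{\overline b(d-c)+b(1-c\overline d)}{1-|d|^2}, \] and $\sup_{(x,y)\in\mathbb R^2}f(x,y)=f(x_0,y_0)=0$. *)

(* Defs.v *)
From Stdlib Require Import Reals.
From Coquelicot Require Import Coquelicot.
Open Scope C_scope.

Definition f54 (b c d : C) (x y : R) : R :=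
  let z : C := (x, y) in
  Re ( (RtoC 2 * z * Cconj b + z * z * Cconj d + Cconj (b * b) * c)
         / (RtoC 1 - c * Cconj d)
     - (RtoC (Cmod z ^ 2) + z * z * Cconj c) / RtoC (1 - Cmod c ^ 2)
     - (RtoC (Cmod b ^ 2) + Cconj (b * b) * d) / RtoC (1 - Cmod d ^ 2)).

Definition critical_point (g : R -> R -> R) (x0 y0 : R) : Prop :=
  is_derive (fun t => g t y0) x0 0%R /\ is_derive (fun t => g x0 t) y0 0%R.

(* Main.v *)
Require Import Defs.
From Stdlib Require Import Reals Lra Psatz.
From Coquelicot Require Import Coquelicot.
Open Scope C_scope.

Lemma Cmod2 (p : C) : (Cmod p ^ 2 = fst p ^ 2 + snd p ^ 2)%R.
Proof. unfold Cmod. rewrite pow2_sqrt; [reflexivity|nra]. Qed.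

Definition Qf (Rw Iw al x0 y0 x y : R) : R :=
  (Rw*((x-x0)^2-(y-y0)^2) - 2*Iw*(x-x0)*(y-y0) - ((x-x0)^2+(y-y0)^2)/al)%R.

Lemma key (b1 b2 c1 c2 d1 d2 x y : R)
  (ha : (1 - (c1^2+c2^2) <> 0)%R) (hb : (1 - (d1^2+d2^2) <> 0)%R)
  (hn : ((1 - (c1*d1 + c2*d2))^2 + (c1*d2 - c2*d1)^2 <> 0)%R) :
  f54 (b1,b2) (c1,c2) (d1,d2) x y =
  Qf (((d1 - c1)*(1 - (c1*d1 + c2*d2)) - (d2 - c2)*(c1*d2 - c2*d1))
        /((1 - (c1^2+c2^2))*((1 - (c1*d1 + c2*d2))^2 + (c1*d2 - c2*d1)^2)))%R
     (-((d1 - c1)*(c1*d2 - c2*d1) + (d2 - c2)*(1 - (c1*d1 + c2*d2)))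
        /((1 - (c1^2+c2^2))*((1 - (c1*d1 + c2*d2))^2 + (c1*d2 - c2*d1)^2)))%R
     (1 - (c1^2+c2^2))%R
     ((b1*(d1 - c1)+b2*(d2 - c2) + b1*(1 - (c1*d1 + c2*d2)) - b2*(c1*d2 - c2*d1))
        /(1 - (d1^2+d2^2)))%R
     ((b1*(d2 - c2)-b2*(d1 - c1)+b1*(c1*d2 - c2*d1)+b2*(1 - (c1*d1 + c2*d2)))
        /(1 - (d1^2+d2^2)))%R x y.
Proof.
  unfold f54, Qf. rewrite !Cmod2.
  unfold Cdiv, Cminus, Cplus, Cmult, Cinv, Copp, Cconj, RtoC, Re. simpl.
  field. repeat split; try assumption. all: intro H; first [ (apply ha; rewrite <- H; ring) | (apply hb; rewrite <- H; ring) | (apply hn; rewrite <- H; ring) ].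
Qed.

Lemma Qf_dx Rw Iw al x0 y0 x y : al <> 0%R ->
  is_derive (fun t => Qf Rw Iw al x0 y0 t y) x
    (2*Rw*(x-x0) - 2*Iw*(y-y0) - 2*(x-x0)/al)%R.
Proof.
  intros Hal. unfold Qf. auto_derive. auto. field. auto.
Qed.

Lemma Qf_dy Rw Iw al x0 y0 x y : al <> 0%R ->
  is_derive (fun t => Qf Rw Iw al x0 y0 x t) y
    (-2*Rw*(y-y0) - 2*Iw*(x-x0) - 2*(y-y0)/al)%R.
Proof.
  intros Hal. unfold Qf. auto_derive. auto. field. auto.
Qed.

Lemma Qf_le Rw Iw al x0 y0 x y : (0 < al)%R -> (al^2*(Rw^2+Iw^2) < 1)%R ->
  (Qf Rw Iw al x0 y0 x y <= 0)%R.
Proof.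
  intros Hal Hw. unfold Qf. set (a := (/al)%R).
  assert (Ha : (a*al = 1)%R) by (unfold a; field; lra).
  assert (Ha0 : (0 < a)%R) by (unfold a; apply Rinv_0_lt_compat; lra).
  assert (Hw' : (Rw^2+Iw^2 < a^2)%R).
  { replace (a^2)%R with (a^2 * (al^2 * (Rw^2+Iw^2)) + a^2*(1 - al^2*(Rw^2+Iw^2)))%R by ring.
    replace (a^2 * (al^2 * (Rw^2+Iw^2)))%R with ((a*al)^2*(Rw^2+Iw^2))%R by ring.
    rewrite Ha. assert (0 < a^2*(1 - al^2*(Rw^2+Iw^2)))%R by (apply Rmult_lt_0_compat; nra). nra. }
  unfold Rdiv. fold a. set (u := (x-x0)%R). set (v := (y-y0)%R).
  assert (H1 : (0 < a - Rw)%R) by nra.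
  assert (H2 : ((a-Rw)*((a-Rw)*u^2 + 2*Iw*u*v + (a+Rw)*v^2)
      = ((a-Rw)*u + Iw*v)^2 + (a^2-Rw^2-Iw^2)*v^2)%R) by ring.
  assert (H3 : (0 <= (a-Rw)*u^2 + 2*Iw*u*v + (a+Rw)*v^2)%R).
  { apply (Rmult_le_reg_l (a-Rw)); [lra|]. rewrite Rmult_0_r, H2.
    apply Rplus_le_le_0_compat; [apply pow2_ge_0 | apply Rmult_le_pos; [nra | apply pow2_ge_0]]. }
  match goal with |- (?e <= 0)%R =>
    replace e with (- ((a-Rw)*u^2 + 2*Iw*u*v + (a+Rw)*v^2))%R by ring end.
  lra.
Qed.

Lemma Qf_crit Rw Iw al x0 y0 x y : (0 < al)%R -> (al^2*(Rw^2+Iw^2) < 1)%R ->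
  (2*Rw*(x-x0) - 2*Iw*(y-y0) - 2*(x-x0)/al = 0)%R ->
  (-2*Rw*(y-y0) - 2*Iw*(x-x0) - 2*(y-y0)/al = 0)%R -> x = x0 /\ y = y0.
Proof.
  intros Hal Hw E1 E2. set (a := (/al)%R) in *.
  assert (Ha : (a*al = 1)%R) by (unfold a; field; lra).
  assert (Hw' : (0 < a^2 - Rw^2-Iw^2)%R).
  { replace (a^2)%R with (a^2 * (al^2 * (Rw^2+Iw^2)) + a^2*(1 - al^2*(Rw^2+Iw^2)))%R by ring.
    replace (a^2 * (al^2 * (Rw^2+Iw^2)))%R with ((a*al)^2*(Rw^2+Iw^2))%R by ring.
    rewrite Ha. assert (0 < a)%R by (unfold a; apply Rinv_0_lt_compat; lra). assert (0 < a^2*(1 - al^2*(Rw^2+Iw^2)))%R by (apply Rmult_lt_0_compat; nra). nra. }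
  unfold Rdiv in E1, E2. fold a in E1, E2.
  set (u := (x-x0)%R) in *. set (v := (y-y0)%R) in *.
  assert (Hu : ((a^2-Rw^2-Iw^2)*u = 0)%R).
  { replace ((a^2-Rw^2-Iw^2)*u)%R with
      (/2*(-(Rw+a)*(2*Rw*u - 2*Iw*v - 2*u*a) + Iw*(-2*Rw*v - 2*Iw*u - 2*v*a)))%R by field.
    rewrite E1, E2. ring. }
  assert (Hv : ((a^2-Rw^2-Iw^2)*v = 0)%R).
  { replace ((a^2-Rw^2-Iw^2)*v)%R with
      (/2*(Iw*(2*Rw*u - 2*Iw*v - 2*u*a) + (Rw-a)*(-2*Rw*v - 2*Iw*u - 2*v*a)))%R by field.
    rewrite E1, E2. ring. }
  apply Rmult_integral in Hu. apply Rmult_integral in Hv.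
  unfold u, v in *. split; lra.
Qed.

Theorem lemma5p4 (b c d : C) (hc : (Cmod c < 1)%R) (hd : (Cmod d < 1)%R) :
  exists x0 y0 : R,
    critical_point (f54 b c d) x0 y0 /\
    (forall x y : R, critical_point (f54 b c d) x y -> x = x0 /\ y = y0) /\
    ((x0, y0) : C) =
      (Cconj b * (d - c) + b * (RtoC 1 - c * Cconj d)) / RtoC (1 - Cmod d ^ 2) /\
    is_lub (fun r : R => exists x y : R, r = f54 b c d x y) (f54 b c d x0 y0) /\
    f54 b c d x0 y0 = 0%R.
Proof.
  destruct b as [b1 b2], c as [c1 c2], d as [d1 d2].
  assert (hc2 : (c1^2+c2^2 < 1)%R).
  { pose proof (Cmod2 (c1,c2)) as E. simpl in E. pose proof (Cmod_ge_0 (c1,c2)). nra. }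
  assert (hd2 : (d1^2+d2^2 < 1)%R).
  { pose proof (Cmod2 (d1,d2)) as E. simpl in E. pose proof (Cmod_ge_0 (d1,d2)). nra. }
  set (al := (1 - (c1^2+c2^2))%R).
  set (be := (1 - (d1^2+d2^2))%R).
  set (N := ((1 - (c1*d1 + c2*d2))^2 + (c1*d2 - c2*d1)^2)%R).
  assert (Hal : (0 < al)%R) by (unfold al; lra).
  assert (Hbe : (0 < be)%R) by (unfold be; lra).
  assert (HN : (N = (d1-c1)^2 + (d2-c2)^2 + al*be)%R) by (unfold N, al, be; ring).
  assert (HN0 : (0 < N)%R) by (rewrite HN; pose proof (Rmult_lt_0_compat _ _ Hal Hbe); pose proof (pow2_ge_0 (d1-c1)); pose proof (pow2_ge_0 (d2-c2)); lra).
  set (Rw := (((d1 - c1)*(1 - (c1*d1 + c2*d2)) - (d2 - c2)*(c1*d2 - c2*d1))/(al*N))%R).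
  set (Iw := (-((d1 - c1)*(c1*d2 - c2*d1) + (d2 - c2)*(1 - (c1*d1 + c2*d2)))/(al*N))%R).
  set (x0 := ((b1*(d1 - c1)+b2*(d2 - c2) + b1*(1 - (c1*d1 + c2*d2)) - b2*(c1*d2 - c2*d1))/be)%R).
  set (y0 := ((b1*(d2 - c2)-b2*(d1 - c1)+b1*(c1*d2 - c2*d1)+b2*(1 - (c1*d1 + c2*d2)))/be)%R).
  assert (Hf : forall x y, f54 (b1,b2) (c1,c2) (d1,d2) x y = Qf Rw Iw al x0 y0 x y).
  { intros x y. apply key; fold al be N; lra. }
  assert (Hw : (al^2*(Rw^2+Iw^2) < 1)%R).
  { assert (E : (al^2*(Rw^2+Iw^2) = ((d1-c1)^2 + (d2-c2)^2)/N)%R).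
    { unfold Rw, Iw. unfold N in *. field. split; lra. }
    rewrite E. apply (Rmult_lt_reg_r N); [lra|]. unfold Rdiv.
    rewrite Rmult_assoc, Rinv_l by lra. nra. }
  assert (Hal0 : al <> 0%R) by lra.
  exists x0, y0. split; [|split; [|split; [|split]]].
  - split.
    + eapply is_derive_ext. intro t. symmetry. apply Hf.
      pose proof (Qf_dx Rw Iw al x0 y0 x0 y0 Hal0) as H.
      replace 0%R with (2*Rw*(x0-x0) - 2*Iw*(y0-y0) - 2*(x0-x0)/al)%R by (field; lra).
      exact H.
    + eapply is_derive_ext. intro t. symmetry. apply Hf.
      pose proof (Qf_dy Rw Iw al x0 y0 x0 y0 Hal0) as H.
      replace 0%R with (-2*Rw*(y0-y0) - 2*Iw*(x0-x0) - 2*(y0-y0)/al)%R by (field; lra).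
      exact H.
  - intros x y [Hx Hy].
    assert (Hx' : is_derive (fun t => Qf Rw Iw al x0 y0 t y) x 0%R).
    { eapply is_derive_ext; [|exact Hx]. intro t. apply Hf. }
    assert (Hy' : is_derive (fun t => Qf Rw Iw al x0 y0 x t) y 0%R).
    { eapply is_derive_ext; [|exact Hy]. intro t. apply Hf. }
    apply (Qf_crit Rw Iw al x0 y0 x y Hal Hw).
    + pose proof (is_derive_unique _ _ _ Hx') as U1.
      pose proof (is_derive_unique _ _ _ (Qf_dx Rw Iw al x0 y0 x y Hal0)) as U2.
      rewrite <- U2. exact U1.
    + pose proof (is_derive_unique _ _ _ Hy') as U1.
      pose proof (is_derive_unique _ _ _ (Qf_dy Rw Iw al x0 y0 x y Hal0)) as U2.
      rewrite <- U2. exact U1.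
  - rewrite Cmod2. unfold Cdiv, Cminus, Cplus, Cmult, Cinv, Copp, Cconj, RtoC. simpl.
    unfold x0, y0. fold be.
    apply injective_projections; simpl; unfold be in *; field; nra.
  - rewrite Hf. assert (Z : Qf Rw Iw al x0 y0 x0 y0 = 0%R) by (unfold Qf; field; lra).
    rewrite Z. split.
    + intros r [x [y ->]]. rewrite Hf. apply Qf_le; assumption.
    + intros ub Hub. apply Hub. exists x0, y0. rewrite Hf. symmetry; exact Z.
  - rewrite Hf. unfold Qf. field; lra.
Qed.
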